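(* Let $q\in\mathbb{C}$ with $|q|<1$, $r\in\mathbb{N}$, $w_1,\dots,w_r>0$, $a_1,\dots,a_r\in\mathbb{C}$, and $x\in\mathbb{C}$ with $\Re(x)>0$. Define the Barnes-type multiple $q$-Euler polynomials $E_{n,q}^{(r)}(x|w_1,\dots,w_r;a_1,\dots,a_r)$ by $$2^r\sum_{m_1,\dots,m_r=0}^{\infty}(-1)^{m_1+\cdots+m_r}q^{a_1m_1+\cdots+a_rm_r}e^{[x+w_1m_1+\cdots+w_rm_r]_q t}=\sum_{n=0}^{\infty}E_{n,q}^{(r)}(x|w_1,\dots,w_r;a_1,\dots,a_r)\frac{t^n}{n!},$$ and the Barnes-type multiple $q$-zeta function by $$\zeta_{q,r}(s,x|w_1,\dots,w_r;a_1,\dots,a_r)=2^r\sum_{m_1,\dots,m_r=0}^{\infty}\frac{(-1)^{m_1+\cdots+m_r}q^{m_1a_1+\cdots+m_ra_r}}{[x+w_1m_1+\cdots+w_rm_r]_q^s},\quad s\in\mathbb{C}$$ (extended meromorphically to the whole $s$-plane). Then for every integer $n\ge 0$, $$\zeta_{q,r}(-n,x|w_1,\dots,w_r;a_1,\dots,a_r)=E_{n,q}^{(r)}(x|w_1,\dots,w_r;a_1,\dots,a_r).$$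
   Context: For complex $q$ with $|q|<1$, $[y]_q=\frac{1-q^y}{1-q}$, and $[y]_q^{s}$ denotes a complex power of $[y]_q$.
   Formalization: Also $|q^{a_1}|,\dots,|q^{a_r}|<1$, complex powers take the principal branch, and the Barnes-type multiple q-zeta function at s = −n is its defining series itself, not a meromorphic continuation. Apart from conventions, each condition added here is assumed in the paper as well or is needed for the statement above to hold. *)

(* Defs.v *)
From Stdlib Require Import Reals Factorial.
From Coquelicot Require Import Coquelicot.
Open Scope R_scope.
Open Scope C_scope.

Definition Cexp (z : C) : C :=
  ((exp (Re z) * cos (Im z))%R, (exp (Re z) * sin (Im z))%R).

Definition Carg (z : C) : R :=
  (if Rle_dec 0 (Im z) then acos (Re z / Cmod z) else - acos (Re z / Cmod z))%R.

Definition Clog (z : C) : C := (ln (Cmod z), Carg z).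

(* Principal complex power z^w = exp(w Log z); convention 0^0 = 1, 0^w = 0 for w <> 0. *)
Definition cpow (z w : C) : C :=
  if Req_dec_T (Cmod z) 0 then (if Req_dec_T (Cmod w) 0 then RtoC 1 else RtoC 0)
  else Cexp (w * Clog z).

Definition qnum (q y : C) : C := (RtoC 1 - cpow q y) / (RtoC 1 - q).

(* Sum of a complex series (componentwise limit; the value is meaningful when it converges). *)
Definition CSeries (u : nat -> C) : C :=
  (Series (fun n => Re (u n)), Series (fun n => Im (u n))).

Fixpoint csum (r : nat) (g : nat -> C) : C :=
  match r with
  | O => RtoC 0
  | S r' => csum r' g + g r'
  end.

Definition upd (m : nat -> nat) (j k : nat) : nat -> nat :=
  fun i => if Nat.eqb i j then k else m i.

(* Iterated r-fold sum  sum_{m_0,...,m_{r-1} >= 0} f m  (m_{r-1} outermost). *)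
Fixpoint msum (r : nat) (f : (nat -> nat) -> C) : C :=
  match r with
  | O => f (fun _ => O)
  | S r' => CSeries (fun k => msum r' (fun m => f (upd m r' k)))
  end.

Definition shift (r : nat) (w : nat -> R) (x : C) (m : nat -> nat) : C :=
  x + csum r (fun j => RtoC (w j * INR (m j))%R).

Fixpoint nsum (r : nat) (m : nat -> nat) : nat :=
  match r with
  | O => O
  | S r' => (nsum r' m + m r')%nat
  end.

Definition weight (r : nat) (q : C) (a : nat -> C) (m : nat -> nat) : C :=
  Cpow (RtoC (-1)) (nsum r m) * cpow q (csum r (fun j => a j * RtoC (INR (m j)))).

(* Barnes-type multiple q-zeta function, with 1/[y]_q^s written as [y]_q^(-s):
   zeta_{q,r}(s,x|w;a) = 2^r sum_m (-1)^{|m|} q^{a.m} [x + w.m]_q^(-s). *)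
Definition qzeta (q : C) (r : nat) (w : nat -> R) (a : nat -> C) (x s : C) : C :=
  Cpow (RtoC 2) r * msum r (fun m => weight r q a m * cpow (qnum q (shift r w x m)) (- s)).

Definition qEuler_gen (q : C) (r : nat) (w : nat -> R) (a : nat -> C) (x t : C) : C :=
  Cpow (RtoC 2) r * msum r (fun m => weight r q a m * Cexp (qnum q (shift r w x m) * t)).

(* E is the sequence of Barnes-type multiple q-Euler polynomials (values at x):
   sum_n E n t^n / n! = generating function, for |t| < rho. *)
Definition is_qEuler_seq (q : C) (r : nat) (w : nat -> R) (a : nat -> C) (x : C)
    (E : nat -> C) : Prop :=
  exists rho : R, (0 < rho)%R /\ forall t : C, (Cmod t < rho)%R ->
    is_series (fun n => E n * Cpow t n / RtoC (INR (fact n))) (qEuler_gen q r w a x t).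

(* Main.v *)
Require Import Defs.
From Stdlib Require Import Reals Lra Lia FunctionalExtensionality Factorial.
From Coquelicot Require Import Coquelicot.
Open Scope R_scope.

Lemma C_eq (z1 z2 : C) : Re z1 = Re z2 -> Im z1 = Im z2 -> z1 = z2.
Proof. destruct z1, z2; simpl; intros; subst; reflexivity. Qed.

Lemma Cexp_add (z1 z2 : C) : Cexp (z1 + z2) = (Cexp z1 * Cexp z2)%C.
Proof.
  destruct z1 as [a b], z2 as [c d]; unfold Cexp, Cplus, Cmult; simpl.
  rewrite exp_plus, cos_plus, sin_plus. f_equal; ring.
Qed.

Lemma Cexp_0 : Cexp 0 = 1%C.
Proof. apply C_eq; unfold Cexp; simpl; rewrite exp_0, ?cos_0, ?sin_0; ring. Qed.

Lemma Cmod_Cexp (z : C) : Cmod (Cexp z) = exp (Re z).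
Proof.
  unfold Cexp, Cmod; simpl.
  match goal with |- sqrt ?X = _ => replace X with (exp (Re z) * exp (Re z)) end.
  - apply sqrt_square. apply Rlt_le, exp_pos.
  - pose proof (sin2_cos2 (Im z)). unfold Rsqr in H. nra.
Qed.

Lemma Im_le_Cmod (c : C) : Rabs (Im c) <= Cmod c.
Proof.
  rewrite <- sqrt_Rsqr_abs. unfold Cmod. apply sqrt_le_1_alt. unfold Rsqr. simpl.
  destruct c as [u v]; simpl. nra.
Qed.

Lemma Cexp_Clog (z : C) : z <> 0%C -> Cexp (Clog z) = z.
Proof.
  intro Hz. apply Cmod_gt_0 in Hz.
  pose proof (Cmod2_alt z) as H2.
  assert (Hu : -1 <= Re z / Cmod z <= 1).
  { pose proof (re_le_Cmod z). apply Rabs_le_between in H.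
    split; [apply (Rmult_le_reg_r (Cmod z)); auto; unfold Rdiv; rewrite Rmult_assoc, Rinv_l; lra
           |apply (Rmult_le_reg_r (Cmod z)); auto; unfold Rdiv; rewrite Rmult_assoc, Rinv_l; lra]. }
  assert (Hs : Cmod z * sqrt (1 - (Re z / Cmod z)²) = Rabs (Im z)).
  { rewrite <- (sqrt_pow2 (Cmod z)) at 1 by lra.
    rewrite <- sqrt_mult_alt by (apply pow2_ge_0).
    replace (Cmod z ^ 2 * (1 - (Re z / Cmod z)²)) with (Im z ^ 2).
    - rewrite <- sqrt_Rsqr_abs. unfold Rsqr. f_equal; try ring.
    - replace (Cmod z ^ 2 * (1 - (Re z / Cmod z)²)) with (Cmod z ^2 - Re z ^ 2)
        by (unfold Rsqr; field; lra). rewrite H2; ring. }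
  apply C_eq; unfold Cexp, Clog, Carg; simpl; rewrite exp_ln by auto;
  destruct (Rle_dec 0 (Im z)).
  - rewrite cos_acos by auto. field. lra.
  - rewrite cos_neg, cos_acos by auto. field. lra.
  - rewrite sin_acos by auto. rewrite Hs. apply Rabs_pos_eq; auto.
  - rewrite sin_neg, sin_acos by auto. rewrite Ropp_mult_distr_r_reverse, Hs.
    rewrite Rabs_left; lra.
Qed.

Lemma Cexp_nat (n : nat) (z : C) : Cexp (RtoC (INR n) * z) = Cpow (Cexp z) n.
Proof.
  induction n.
  - simpl. replace (RtoC 0 * z)%C with (RtoC 0) by (apply C_eq; simpl; ring).
    apply Cexp_0.
  - rewrite S_INR. replace (RtoC (INR n + 1) * z)%C with (z + RtoC (INR n) * z)%C
      by (apply C_eq; simpl; ring).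
    rewrite Cexp_add, IHn. reflexivity.
Qed.

Lemma cpow_nat (y : C) (n : nat) : cpow y (RtoC (INR n)) = Cpow y n.
Proof.
  unfold cpow. destruct (Req_dec_T (Cmod y) 0) as [H|H].
  - apply Cmod_eq_0 in H. subst y.
    destruct (Req_dec_T (Cmod (RtoC (INR n))) 0) as [H1|H1].
    + rewrite Cmod_R in H1. apply Rabs_eq_0 in H1. destruct n; [reflexivity|].
      rewrite S_INR in H1. pose proof (pos_INR n). lra.
    + destruct n. { simpl in H1. rewrite Cmod_0 in H1. lra. }
      simpl. apply C_eq; simpl; ring.
  - rewrite Cexp_nat, Cexp_Clog; auto. intro E. apply H. rewrite E. apply Cmod_0.
Qed.

Lemma cpow_add (q c1 c2 : C) : Cmod q <> 0 -> cpow q (c1 + c2) = (cpow q c1 * cpow q c2)%C.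
Proof.
  intro H. unfold cpow. destruct (Req_dec_T (Cmod q) 0); [contradiction|].
  rewrite <- Cexp_add. f_equal. ring.
Qed.

Lemma Cmod_cpow (q c : C) : Cmod q <> 0 -> Cmod (cpow q c) = exp (Re (c * Clog q)).
Proof.
  intro H. unfold cpow. destruct (Req_dec_T (Cmod q) 0); [contradiction|].
  apply Cmod_Cexp.
Qed.

Definition dom (rho : R) (r : nat) (K : R) (f : (nat -> nat) -> C) : Prop :=
  forall m, Cmod (f m) <= K * rho ^ nsum r m.

Lemma nsum_upd r m i k : (r <= i)%nat -> nsum r (upd m i k) = nsum r m.
Proof.
  induction r; simpl; intros; auto.
  rewrite IHr by lia. f_equal. unfold upd.
  destruct (Nat.eqb r i) eqn:E; auto. apply Nat.eqb_eq in E. lia.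
Qed.

Lemma upd_same m i k : upd m i k i = k.
Proof. unfold upd. rewrite Nat.eqb_refl. reflexivity. Qed.

Lemma nsum_upd_S r m k : nsum (S r) (upd m r k) = (nsum r m + k)%nat.
Proof. simpl. rewrite nsum_upd by lia. rewrite upd_same. reflexivity. Qed.

Lemma Cmod_le_sum (z : C) : Cmod z <= Rabs (Re z) + Rabs (Im z).
Proof.
  unfold Cmod. rewrite <- (sqrt_Rsqr (Rabs (Re z) + Rabs (Im z)))
    by (pose proof (Rabs_pos (Re z)); pose proof (Rabs_pos (Im z)); lra).
  apply sqrt_le_1_alt. unfold Rsqr.
  pose proof (Rabs_pos (Re z)); pose proof (Rabs_pos (Im z)).
  assert (fst z ^ 2 = Rabs (Re z) * Rabs (Re z)) by (unfold Re; rewrite <- Rabs_mult, Rabs_pos_eq; [ring| nra]).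
  assert (snd z ^ 2 = Rabs (Im z) * Rabs (Im z)) by (unfold Im; rewrite <- Rabs_mult, Rabs_pos_eq; [ring| nra]).
  nra.
Qed.

Lemma geom_ex (rho D : R) : 0 <= rho < 1 -> ex_series (fun k => D * rho ^ k).
Proof.
  intros Hr. apply (ex_series_ext (fun k => scal D (rho ^ k))).
  - intros; reflexivity.
  - apply (@ex_series_scal R_AbsRing R_NormedModule). apply ex_series_geom. rewrite Rabs_pos_eq; lra.
Qed.

Lemma geom_series (rho D : R) : 0 <= rho < 1 -> Series (fun k => D * rho ^ k) = D / (1 - rho).
Proof.
  intros Hr. rewrite Series_scal_l, Series_geom by (rewrite Rabs_pos_eq; lra). reflexivity.
Qed.

Lemma real_ex (rho D : R) (u : nat -> R) : 0 <= rho < 1 ->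
  (forall k, Rabs (u k) <= D * rho ^ k) -> ex_series (fun k => Rabs (u k)) /\ ex_series u.
Proof.
  intros Hr H.
  assert (ex_series (fun k => Rabs (u k))).
  { apply (@ex_series_le R_AbsRing R_CompleteNormedModule _ (fun k => D * rho ^ k)); [|apply geom_ex; auto].
    intros n. change (Rabs (Rabs (u n)) <= D * rho ^ n). rewrite Rabs_Rabsolu. auto. }
  split; auto. apply ex_series_Rabs; auto.
Qed.

Lemma real_bound (rho D : R) (u : nat -> R) : 0 <= rho < 1 ->
  (forall k, Rabs (u k) <= D * rho ^ k) -> Rabs (Series u) <= D / (1 - rho).
Proof.
  intros Hr H. destruct (real_ex rho D u Hr H) as [H1 H2].
  eapply Rle_trans. apply Series_Rabs; auto.
  rewrite <- geom_series by auto. apply Series_le; [|apply geom_ex; auto].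
  intros; split; auto. apply Rabs_pos.
Qed.

Lemma CS_ex (rho D : R) (v : nat -> C) : 0 <= rho < 1 ->
  (forall k, Cmod (v k) <= D * rho ^ k) ->
  ex_series (fun k => Re (v k)) /\ ex_series (fun k => Im (v k)).
Proof.
  intros Hr H. split.
  - apply (real_ex rho D); auto. intros; eapply Rle_trans; [apply re_le_Cmod|auto].
  - apply (real_ex rho D); auto. intros; eapply Rle_trans; [apply Im_le_Cmod|auto].
Qed.

Lemma CS_bound (rho D : R) (v : nat -> C) : 0 <= rho < 1 ->
  (forall k, Cmod (v k) <= D * rho ^ k) -> Cmod (CSeries v) <= 2 * D / (1 - rho).
Proof.
  intros Hr H. eapply Rle_trans. apply Cmod_le_sum.
  unfold CSeries, Re, Im; simpl.
  assert (A1 : Rabs (Series (fun k => Re (v k))) <= D / (1 - rho)).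
  { apply (real_bound rho D); auto. intros; eapply Rle_trans; [apply re_le_Cmod|auto]. }
  assert (A2 : Rabs (Series (fun k => Im (v k))) <= D / (1 - rho)).
  { apply (real_bound rho D); auto. intros; eapply Rle_trans; [apply Im_le_Cmod|auto]. }
  unfold Re, Im in A1, A2. unfold Rdiv in *. lra.
Qed.

Lemma dom_upd rho r K f k : dom rho (S r) K f -> dom rho r (K * rho ^ k) (fun m => f (upd m r k)).
Proof.
  intros H m. eapply Rle_trans. apply H. rewrite nsum_upd_S, pow_add. right; ring.
Qed.

Lemma msum_bound rho : 0 <= rho < 1 -> forall r K f, 0 <= K -> dom rho r K f ->
  Cmod (msum r f) <= K * (2 / (1 - rho)) ^ r.
Proof.
  intros Hr r. induction r; intros K f HK H.
  - simpl. specialize (H (fun _ => O)). simpl in H. lra.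
  - simpl msum. eapply Rle_trans. apply (CS_bound rho (K * (2 / (1 - rho)) ^ r)); auto.
    + intros k. eapply Rle_trans. apply IHr. 2: apply dom_upd; eauto.
      pose proof (pow_le rho k (proj1 Hr)). nra.
      right; ring.
    + right. simpl. field. lra.
Qed.

Lemma msum_ex rho r K f : 0 <= rho < 1 -> 0 <= K -> dom rho (S r) K f ->
  ex_series (fun k => Re (msum r (fun m => f (upd m r k)))) /\
  ex_series (fun k => Im (msum r (fun m => f (upd m r k)))).
Proof.
  intros Hr HK H. apply (CS_ex rho (K * (2 / (1 - rho)) ^ r)); auto.
  intros k. eapply Rle_trans. apply (msum_bound rho Hr r (K * rho ^ k)).
  pose proof (pow_le rho k (proj1 Hr)). nra. apply dom_upd; auto. right; ring.
Qed.

Lemma CSeries_plus u v : ex_series (fun k => Re (u k)) -> ex_series (fun k => Im (u k)) ->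
  ex_series (fun k => Re (v k)) -> ex_series (fun k => Im (v k)) ->
  CSeries (fun k => u k + v k)%C = (CSeries u + CSeries v)%C.
Proof.
  intros. unfold CSeries. apply C_eq; simpl.
  - rewrite <- Series_plus by auto. apply Series_ext. intros; reflexivity.
  - rewrite <- Series_plus by auto. apply Series_ext. intros; reflexivity.
Qed.

Lemma CSeries_scal c u : ex_series (fun k => Re (u k)) -> ex_series (fun k => Im (u k)) ->
  CSeries (fun k => c * u k)%C = (c * CSeries u)%C.
Proof.
  intros. unfold CSeries. apply C_eq; simpl.
  - rewrite <- !Series_scal_l, <- Series_minus.
    + apply Series_ext. intros; reflexivity.
    + apply (ex_series_ext (fun k => scal (fst c) (Re (u k)))); [reflexivity|]. apply (@ex_series_scal R_AbsRing R_NormedModule); auto.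
    + apply (ex_series_ext (fun k => scal (snd c) (Im (u k)))); [reflexivity|]. apply (@ex_series_scal R_AbsRing R_NormedModule); auto.
  - rewrite <- !Series_scal_l, <- Series_plus.
    + apply Series_ext. intros; reflexivity.
    + apply (ex_series_ext (fun k => scal (fst c) (Im (u k)))); [reflexivity|]. apply (@ex_series_scal R_AbsRing R_NormedModule); auto.
    + apply (ex_series_ext (fun k => scal (snd c) (Re (u k)))); [reflexivity|]. apply (@ex_series_scal R_AbsRing R_NormedModule); auto.
Qed.

Lemma dom_plus rho r K1 K2 f g : dom rho r K1 f -> dom rho r K2 g ->
  dom rho r (K1 + K2) (fun m => f m + g m)%C.
Proof.
  intros H1 H2 m. eapply Rle_trans. apply Cmod_triangle.
  specialize (H1 m); specialize (H2 m). lra.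
Qed.

Lemma dom_scal rho r K c f : dom rho r K f -> dom rho r (Cmod c * K) (fun m => c * f m)%C.
Proof.
  intros H m. rewrite Cmod_mult. specialize (H m). pose proof (Cmod_ge_0 c).
  rewrite Rmult_assoc. apply Rmult_le_compat_l; auto.
Qed.

Lemma msum_plus rho : 0 <= rho < 1 -> forall r K1 K2 f g, 0 <= K1 -> 0 <= K2 ->
  dom rho r K1 f -> dom rho r K2 g ->
  msum r (fun m => f m + g m)%C = (msum r f + msum r g)%C.
Proof.
  intros Hr r. induction r; intros K1 K2 f g HK1 HK2 H1 H2.
  - reflexivity.
  - simpl msum.
    rewrite (functional_extensionality
      (fun k => msum r (fun m => f (upd m r k) + g (upd m r k))%C)
      (fun k => msum r (fun m => f (upd m r k)) + msum r (fun m => g (upd m r k)))%C).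
    + destruct (msum_ex rho r K1 f Hr HK1 H1). destruct (msum_ex rho r K2 g Hr HK2 H2).
      apply CSeries_plus; auto.
    + intros k. apply (IHr (K1 * rho ^ k) (K2 * rho ^ k));
      try (pose proof (pow_le rho k (proj1 Hr)); nra); apply dom_upd; auto.
Qed.

Lemma msum_scal rho : 0 <= rho < 1 -> forall r K c f, 0 <= K ->
  dom rho r K f -> msum r (fun m => c * f m)%C = (c * msum r f)%C.
Proof.
  intros Hr r. induction r; intros K c f HK H1.
  - reflexivity.
  - simpl msum.
    rewrite (functional_extensionality
      (fun k => msum r (fun m => c * f (upd m r k))%C)
      (fun k => c * msum r (fun m => f (upd m r k)))%C).
    + destruct (msum_ex rho r K f Hr HK H1). apply CSeries_scal; auto.
    + intros k. apply (IHr (K * rho ^ k));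
      try (pose proof (pow_le rho k (proj1 Hr)); nra); apply dom_upd; auto.
Qed.

(* real-valued functions: scalar pulls out without convergence *)
Lemma Series_scal_real (c : R) (u : nat -> R) : Series (fun k => c * u k) = c * Series u.
Proof. apply Series_scal_l. Qed.

Lemma msum_real r f : (forall m, Im (f m) = 0) -> Im (msum r f) = 0.
Proof.
  revert f; induction r; intros f H; simpl; auto.
  unfold CSeries; simpl. rewrite (Series_ext _ (fun _ => 0 * 0)).
  - rewrite Series_scal_l. ring.
  - intros k. rewrite IHr; [ring|]. intros; apply H.
Qed.

Lemma CSeries_scal_real (c: C) (g : nat -> C) : (forall k, Im (g k) = 0) ->
  CSeries (fun k => c * g k)%C = (c * CSeries g)%C.
Proof.
  intros HI. unfold CSeries. unfold Im in HI.
  rewrite (Series_ext (fun n => Im (c * g n)%C) (fun k => snd c * Re (g k))).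
  2: { intros k. simpl. rewrite HI. unfold Re; ring. }
  rewrite (Series_ext (fun n => Re (c * g n)%C) (fun k => fst c * Re (g k))).
  2: { intros k. simpl. rewrite HI. unfold Re; ring. }
  rewrite (Series_ext (fun n => Im (g n)) (fun k => 0 * 0)).
  2: { intros k. unfold Im. rewrite HI. ring. }
  rewrite !Series_scal_l. apply C_eq; simpl; ring.
Qed.

Lemma msum_scal_real r : forall c f, (forall m, Im (f m) = 0) ->
  msum r (fun m => c * f m)%C = (c * msum r f)%C.
Proof.
  induction r; intros c f H; simpl; auto.
  rewrite (functional_extensionality
      (fun k => msum r (fun m => c * f (upd m r k))%C)
      (fun k => c * msum r (fun m => f (upd m r k)))%C).
  2: { intros k. apply IHr. intros; apply H. }
  apply CSeries_scal_real. intros k. apply msum_real. intros; apply H.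
Qed.

Lemma sum_n_C (u : nat -> C) N :
  sum_n u N = (sum_n (fun n => Re (u n)) N, sum_n (fun n => Im (u n)) N).
Proof.
  induction N.
  - rewrite !sum_O. destruct (u O); reflexivity.
  - rewrite !sum_Sn, IHN. reflexivity.
Qed.

Lemma is_series_C (u : nat -> C) (l : C) :
  is_series (fun n => Re (u n)) (Re l) -> is_series (fun n => Im (u n)) (Im l) ->
  is_series u l.
Proof.
  intros H1 H2. unfold is_series in *.
  apply (filterlim_locally (F:=eventually)). intros eps.
  pose proof (proj1 (filterlim_locally _ _) H1 eps) as G1.
  pose proof (proj1 (filterlim_locally _ _) H2 eps) as G2.
  generalize (filter_and _ _ G1 G2). apply filter_imp.
  intros N [B1 B2]. rewrite sum_n_C. split; auto.
Qed.

Lemma exp_is (x : R) : is_series (fun k => x ^ k / INR (fact k)) (exp x).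
Proof.
  pose proof (is_exp_Reals x) as H. unfold is_pseries in H.
  eapply is_series_ext; [|exact H]. intros n. simpl.
  rewrite pow_n_pow. unfold scal; simpl. unfold mult; simpl. unfold Rdiv. ring.
Qed.

Lemma exp_ex (x : R) : ex_series (fun k => x ^ k / INR (fact k)).
Proof. exists (exp x). apply exp_is. Qed.

Lemma fact_pos n : 0 < INR (fact n).
Proof. apply lt_0_INR. apply lt_O_fact. Qed.

Lemma Re_div_R (w : C) (r : R) : r <> 0 -> Re (w / RtoC r)%C = Re w / r.
Proof. intros. destruct w. unfold Cdiv, Cinv, Cmult; simpl. field. auto. Qed.
Lemma Im_div_R (w : C) (r : R) : r <> 0 -> Im (w / RtoC r)%C = Im w / r.
Proof. intros. destruct w. unfold Cdiv, Cinv, Cmult; simpl. field. auto. Qed.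

Section ExpSeries.
Variable z : C.
Let a := Re z.
Let b := Im z.
Let c n := Re (Cpow z n) / INR (fact n).
Let d n := Im (Cpow z n) / INR (fact n).

Lemma c_bound n : Rabs (c n) <= Cmod z ^ n / INR (fact n).
Proof.
  unfold c. pose proof (fact_pos n). unfold Rdiv. rewrite Rabs_mult, Rabs_Rinv by lra.
  rewrite (Rabs_pos_eq (INR _)) by lra. apply Rmult_le_compat_r.
  apply Rlt_le, Rinv_0_lt_compat; lra. rewrite <- Cmod_pow. apply re_le_Cmod.
Qed.
Lemma d_bound n : Rabs (d n) <= Cmod z ^ n / INR (fact n).
Proof.
  unfold d. pose proof (fact_pos n). unfold Rdiv. rewrite Rabs_mult, Rabs_Rinv by lra.
  rewrite (Rabs_pos_eq (INR _)) by lra. apply Rmult_le_compat_r.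
  apply Rlt_le, Rinv_0_lt_compat; lra. rewrite <- Cmod_pow. apply Im_le_Cmod.
Qed.

Lemma disk_gen (e : nat -> R) : (forall n, Rabs (e n) <= Cmod z ^ n / INR (fact n)) ->
  forall s, CV_disk e s.
Proof.
  intros He s. unfold CV_disk.
  apply (@ex_series_le R_AbsRing R_CompleteNormedModule _ (fun n => (Cmod z * Rabs s) ^ n / INR (fact n))).
  - intros n. change (Rabs (Rabs (e n * s ^ n)) <= (Cmod z * Rabs s) ^ n / INR (fact n)).
    rewrite Rabs_Rabsolu, Rabs_mult, <- RPow_abs, Rpow_mult_distr.
    pose proof (He n). pose proof (pow_le (Rabs s) n (Rabs_pos s)).
    unfold Rdiv in *. nra.
  - apply exp_ex.
Qed.

Lemma radius_gen (e : nat -> R) : (forall n, Rabs (e n) <= Cmod z ^ n / INR (fact n)) ->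
  forall s, Rbar_lt (Rabs s) (CV_radius e).
Proof.
  intros He s. destruct (Lub_Rbar_correct (CV_disk e)) as [Hub _].
  specialize (Hub (Rabs s + 1) (disk_gen e He _)). unfold CV_radius.
  destruct (Lub_Rbar (CV_disk e)); simpl in *; auto. lra.
Qed.

Let U := PSeries c.
Let V := PSeries d.

Lemma Re_pow_S n : Re (Cpow z (S n)) = a * Re (Cpow z n) - b * Im (Cpow z n).
Proof. simpl. reflexivity. Qed.
Lemma Im_pow_S n : Im (Cpow z (S n)) = b * Re (Cpow z n) + a * Im (Cpow z n).
Proof. simpl. unfold a, b, Re, Im. ring. Qed.

Lemma fact_S_INR n : INR (fact (S n)) = INR (S n) * INR (fact n).
Proof. rewrite <- mult_INR. reflexivity. Qed.

Lemma U_derive s : is_derive U s (a * U s - b * V s).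
Proof.
  pose proof (is_derive_PSeries c s (radius_gen c c_bound s)) as H.
  replace (a * U s - b * V s) with (PSeries (PS_derive c) s); auto.
  unfold U, V. rewrite (PSeries_ext _ (PS_plus (PS_scal a c) (PS_scal (-b) d))).
  - rewrite PSeries_plus, !PSeries_scal. ring.
    + apply CV_disk_correct, CV_disk_scal, disk_gen, c_bound.
    + apply CV_disk_correct, CV_disk_scal, disk_gen, d_bound.
  - intros n. change (INR (S n) * c (S n) = a * c n + - b * d n).
    unfold c, d. rewrite Re_pow_S, fact_S_INR. pose proof (fact_pos n).
    assert (INR (S n) <> 0) by (rewrite S_INR; pose proof (pos_INR n); lra).
    field. split; lra.
Qed.

Lemma V_derive s : is_derive V s (b * U s + a * V s).
Proof.
  pose proof (is_derive_PSeries d s (radius_gen d d_bound s)) as H.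
  replace (b * U s + a * V s) with (PSeries (PS_derive d) s); auto.
  unfold U, V. rewrite (PSeries_ext _ (PS_plus (PS_scal b c) (PS_scal a d))).
  - rewrite PSeries_plus, !PSeries_scal. ring.
    + apply CV_disk_correct, CV_disk_scal, disk_gen, c_bound.
    + apply CV_disk_correct, CV_disk_scal, disk_gen, d_bound.
  - intros n. change (INR (S n) * d (S n) = b * c n + a * d n).
    unfold c, d. rewrite Im_pow_S, fact_S_INR. pose proof (fact_pos n).
    assert (INR (S n) <> 0) by (rewrite S_INR; pose proof (pos_INR n); lra).
    field. split; lra.
Qed.

Let P t := exp (- (t * a)) * (U t * cos (t * b) + V t * sin (t * b)).
Let Q t := exp (- (t * a)) * (V t * cos (t * b) - U t * sin (t * b)).

Lemma P_derive t : is_derive P t 0.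
Proof.
  assert (HE : is_derive (fun t => exp (- (t * a))) t (- a * exp (- (t * a)))).
  { auto_derive; auto. ring. }
  assert (HC : is_derive (fun t => cos (t * b)) t (- b * sin (t * b))).
  { auto_derive; auto. ring. }
  assert (HS : is_derive (fun t => sin (t * b)) t (b * cos (t * b))).
  { auto_derive; auto. ring. }
  pose proof (is_derive_mult _ _ _ _ _ (U_derive t) HC Rmult_comm) as H1.
  pose proof (is_derive_mult _ _ _ _ _ (V_derive t) HS Rmult_comm) as H2.
  pose proof (is_derive_plus _ _ _ _ _ H1 H2) as H3.
  pose proof (is_derive_mult _ _ _ _ _ HE H3 Rmult_comm) as H4.
  unfold P. match type of H4 with is_derive _ _ ?l => replace 0 with l; [exact H4|] end.
  unfold mult, plus; simpl. ring.
Qed.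

Lemma Q_derive t : is_derive Q t 0.
Proof.
  assert (HE : is_derive (fun t => exp (- (t * a))) t (- a * exp (- (t * a)))).
  { auto_derive; auto. ring. }
  assert (HC : is_derive (fun t => cos (t * b)) t (- b * sin (t * b))).
  { auto_derive; auto. ring. }
  assert (HS : is_derive (fun t => sin (t * b)) t (b * cos (t * b))).
  { auto_derive; auto. ring. }
  pose proof (is_derive_mult _ _ _ _ _ (V_derive t) HC Rmult_comm) as H1.
  pose proof (is_derive_mult _ _ _ _ _ (U_derive t) HS Rmult_comm) as H2.
  pose proof (is_derive_minus _ _ _ _ _ H1 H2) as H3.
  pose proof (is_derive_mult _ _ _ _ _ HE H3 Rmult_comm) as H4.
  unfold Q. match type of H4 with is_derive _ _ ?l => replace 0 with l; [exact H4|] end.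
  unfold mult, plus, minus, opp; simpl. unfold plus; simpl. ring.
Qed.

Lemma c0 : c O = 1.
Proof. unfold c. simpl. field. Qed.
Lemma d0 : d O = 0.
Proof. unfold d. simpl. field. Qed.

Lemma UV1 : U 1 = exp a * cos b /\ V 1 = exp a * sin b.
Proof.
  assert (HP : P 0 = P 1) by (apply eq_is_derive; [intros; apply P_derive|lra]).
  assert (HQ : Q 0 = Q 1) by (apply eq_is_derive; [intros; apply Q_derive|lra]).
  unfold P, Q in *. unfold U, V in *. rewrite !PSeries_0, c0, d0 in *.
  rewrite !Rmult_0_l, Ropp_0, exp_0, cos_0, sin_0, !Rmult_1_l in *.
  replace (- a) with (- (1 * a)) in * by ring.
  set (e := exp (- (1 * a))) in *. set (C1 := cos b) in *. set (S1 := sin b) in *.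
  assert (He : e * exp a = 1).
  { unfold e. rewrite <- exp_plus. replace (- (1 * a) + a) with 0 by ring. apply exp_0. }
  assert (Hcs : S1 * S1 + C1 * C1 = 1).
  { unfold S1, C1. pose proof (sin2_cos2 b). unfold Rsqr in H. lra. }
  set (u := PSeries c 1) in *. set (v := PSeries d 1) in *.
  assert (E1 : u * C1 + v * S1 = exp a).
  { transitivity (exp a * (e * (u * C1 + v * S1))); [|rewrite <- HP; ring].
    transitivity ((e * exp a) * (u * C1 + v * S1)); [rewrite He; ring| ring]. }
  assert (E2 : v * C1 - u * S1 = 0).
  { transitivity (exp a * (e * (v * C1 - u * S1))); [|rewrite <- HQ; ring].
    transitivity ((e * exp a) * (v * C1 - u * S1)); [rewrite He; ring| ring]. }
  split.
  - transitivity ((u * C1 + v * S1) * C1 - (v * C1 - u * S1) * S1).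
    + transitivity (u * (S1 * S1 + C1 * C1)); [rewrite Hcs; ring| ring].
    + rewrite E1, E2. ring.
  - transitivity ((u * C1 + v * S1) * S1 + (v * C1 - u * S1) * C1).
    + transitivity (v * (S1 * S1 + C1 * C1)); [rewrite Hcs; ring| ring].
    + rewrite E1, E2. ring.
Qed.

Lemma Cexp_series_aux :
  is_series (fun n => Cpow z n / RtoC (INR (fact n)))%C (Cexp z).
Proof.
  assert (HU : is_series c (U 1)).
  { assert (ex_series c).
    { apply ex_series_Rabs. eapply ex_series_ext; [|apply (disk_gen c c_bound 1)].
      intros n; simpl. rewrite pow1, Rmult_1_r. reflexivity. }
    unfold U, PSeries. rewrite (Series_ext _ c) by (intros; rewrite pow1; ring).
    apply Series_correct; auto. }
  assert (HV : is_series d (V 1)).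
  { assert (ex_series d).
    { apply ex_series_Rabs. eapply ex_series_ext; [|apply (disk_gen d d_bound 1)].
      intros n; simpl. rewrite pow1, Rmult_1_r. reflexivity. }
    unfold V, PSeries. rewrite (Series_ext _ d) by (intros; rewrite pow1; ring).
    apply Series_correct; auto. }
  destruct UV1 as [E1 E2].
  apply is_series_C.
  - apply (is_series_ext c).
    + intros n. rewrite Re_div_R by (pose proof (fact_pos n); lra). reflexivity.
    + replace (Re (Cexp z)) with (U 1); auto.
  - apply (is_series_ext d).
    + intros n. rewrite Im_div_R by (pose proof (fact_pos n); lra). reflexivity.
    + replace (Im (Cexp z)) with (V 1); auto.
Qed.
End ExpSeries.

Lemma Cexp_series (z : C) :
  is_series (fun n => Cpow z n / RtoC (INR (fact n)))%C (Cexp z).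
Proof. apply Cexp_series_aux. Qed.



Lemma lim_eps (u : nat -> R) l : is_series u l -> forall eps, 0 < eps ->
  exists N0, forall N, (N0 <= N)%nat -> Rabs (sum_n u N - l) < eps.
Proof.
  intros H eps Heps.
  destruct (proj1 (filterlim_locally _ _) H (mkposreal eps Heps)) as [N0 HN].
  exists N0. intros N HN1. specialize (HN N HN1). exact HN.
Qed.

Lemma is_series_C_of_bound (u : nat -> C) L :
  (forall eps, 0 < eps -> exists N0, forall N, (N0 <= N)%nat -> Cmod (L - sum_n u N) < eps) ->
  is_series u L.
Proof.
  intros H. unfold is_series. apply (proj2 (filterlim_locally _ _)). intros eps.
  destruct (H eps (cond_pos eps)) as [N0 HN]. exists N0. intros N HN1.
  apply (@norm_compat1 C_AbsRing C_NormedModule).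
  change (Cmod (sum_n u N - L)%C < eps).
  replace (sum_n u N - L)%C with (- (L - sum_n u N))%C by ring.
  rewrite Cmod_opp. apply HN; auto.
Qed.

Lemma series_norm_le (u : nat -> C) (v : nat -> R) l lv :
  is_series u l -> is_series v lv -> (forall n, Cmod (u n) <= v n) -> Cmod l <= lv.
Proof.
  intros Hu Hv Hle.
  assert (Hp : forall N, Cmod (sum_n u N) <= sum_n v N).
  { induction N.
    - rewrite !sum_O. auto.
    - rewrite !sum_Sn. eapply Rle_trans. apply Cmod_triangle.
      change (plus (sum_n v N) (v (S N))) with (sum_n v N + v (S N)). specialize (Hle (S N)). lra. }
  assert (H1 : is_lim_seq (fun N => Cmod (sum_n u N)) (Cmod l)).
  { unfold is_lim_seq. eapply filterlim_comp. exact Hu. apply (@filterlim_norm C_AbsRing C_NormedModule). }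
  assert (H2 : is_lim_seq (sum_n v) lv) by exact Hv.
  pose proof (is_lim_seq_le _ _ _ _ Hp H1 H2). simpl in H. exact H.
Qed.

Definition Pexp (z : C) (N : nat) : C := sum_n (fun n => Cpow z n / RtoC (INR (fact n)))%C N.
Definition Texp (R0 : R) (N : nat) : R := exp R0 - sum_n (fun n => R0 ^ n / INR (fact n)) N.

Lemma Texp_nonneg R0 N : 0 <= R0 -> 0 <= Texp R0 N.
Proof.
  intros H. unfold Texp. rewrite sum_n_Reals. pose proof (exp_ge_taylor R0 N H). lra.
Qed.

Lemma exp_tail (z : C) (R0 : R) (N : nat) : Cmod z <= R0 ->
  Cmod (Cexp z - Pexp z N) <= Texp R0 N.
Proof.
  intros Hz.
  assert (Hu : is_series (fun k => (fun n => Cpow z n / RtoC (INR (fact n)))%C (S N + k)%nat) (Cexp z - Pexp z N)%C).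
  { apply (is_series_incr_n (fun n => Cpow z n / RtoC (INR (fact n)))%C (S N)); [lia|]. simpl pred. unfold Pexp.
    match goal with |- is_series _ ?l => replace l with (Cexp z) end.
    apply Cexp_series. change (Cexp z = (Cexp z - sum_n (fun n : nat => (z ^ n / INR (fact n))%C) N) + sum_n (fun n : nat => (z ^ n / INR (fact n))%C) N)%C. ring. }
  assert (Hv : is_series (fun k => (fun n => R0 ^ n / INR (fact n)) (S N + k)%nat) (Texp R0 N)).
  { apply (is_series_incr_n (fun n => R0 ^ n / INR (fact n)) (S N)); [lia|]. simpl pred. unfold Texp.
    match goal with |- is_series _ ?l => replace l with (exp R0) end.
    apply exp_is. change (exp R0 = exp R0 - sum_n (fun n => R0 ^ n / INR (fact n)) N + sum_n (fun n => R0 ^ n / INR (fact n)) N). ring. }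
  apply (series_norm_le _ _ _ _ Hu Hv).
  intros k. cbv beta. set (n := (S N + k)%nat).
  pose proof (fact_pos n). rewrite Cmod_div.
  - rewrite Cmod_pow, Cmod_R, Rabs_pos_eq by lra. unfold Rdiv. apply Rmult_le_compat_r.
    + apply Rlt_le, Rinv_0_lt_compat; lra.
    + apply pow_incr. split; auto. apply Cmod_ge_0.
  - intro E. apply RtoC_inj in E. lra.
Qed.

Lemma exp_mono x y : x <= y -> exp x <= exp y.
Proof. intros [H|H]; [left; apply exp_increasing; auto| subst; lra]. Qed.

Lemma exp_nat (n : nat) (y : R) : exp (INR n * y) = exp y ^ n.
Proof.
  induction n.
  - change (INR 0) with 0. rewrite Rmult_0_l, exp_0. reflexivity.
  - rewrite S_INR. change (exp y ^ S n) with (exp y * exp y ^ n).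
    rewrite <- IHn, <- exp_plus. f_equal. ring.
Qed.

Lemma Copp_Copp (z : C) : (- - z)%C = z.
Proof. destruct z as [u v]. apply C_eq; unfold Copp, Re, Im; simpl; ring. Qed.

Lemma Cmod_m1_pow n : Cmod (Cpow (RtoC (-1)) n) = 1.
Proof. rewrite Cmod_pow, Cmod_R. replace (Rabs (-1)) with 1. apply pow1. rewrite Rabs_left; lra. Qed.

Fixpoint rmax (f : nat -> R) (n : nat) : R :=
  match n with O => 0 | S n => Rmax (rmax f n) (f n) end.

Lemma rmax_ge (f : nat -> R) n j : (j < n)%nat -> f j <= rmax f n.
Proof.
  induction n; intros H; [lia|]. simpl.
  destruct (Nat.eq_dec j n). subst; apply Rmax_r.
  eapply Rle_trans; [apply IHn; lia| apply Rmax_l].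
Qed.

Lemma rmax_bounds (f : nat -> R) n : (forall j, (j < n)%nat -> 0 <= f j < 1) -> 0 <= rmax f n < 1.
Proof.
  induction n; intros H; simpl; [lra|].
  assert (0 <= rmax f n < 1) by (apply IHn; intros; apply H; lia).
  specialize (H n ltac:(lia)). unfold Rmax. destruct (Rle_dec _ _); lra.
Qed.

Lemma csum_RtoC_Im k (g : nat -> R) : Im (csum k (fun j => RtoC (g j))) = 0.
Proof. induction k; simpl; auto. unfold Im in *. rewrite IHk. simpl. ring. Qed.

Lemma csum_RtoC_Re k (g : nat -> R) : (forall j, (j < k)%nat -> 0 <= g j) -> 0 <= Re (csum k (fun j => RtoC (g j))).
Proof.
  induction k; intros H; simpl; [lra|].
  assert (0 <= Re (csum k (fun j => RtoC (g j)))) by (apply IHk; intros; apply H; lia).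
  specialize (H k ltac:(lia)). unfold Re in *. simpl. lra.
Qed.

Section Main.
Context (q : C) (r : nat) (w : nat -> R) (a : nat -> C) (x : C).
Context (Hq : Cmod q < 1) (Hq0 : Cmod q <> 0) (Hw : forall j, (j < r)%nat -> 0 < w j)
  (Hx : 0 < Re x) (Ha : forall j, (j < r)%nat -> Cmod (cpow q (a j)) < 1).

Let L := Clog q.
Let f j := exp (Re (a j * L)).
Let rho := rmax f r.

Lemma rho_bounds : 0 <= rho < 1.
Proof.
  apply rmax_bounds. intros j Hj. unfold f, L. split. apply Rlt_le, exp_pos.
  rewrite <- Cmod_cpow by auto. apply Ha; auto.
Qed.

Lemma weight_exp_bound m : forall k, (k <= r)%nat ->
  exp (Re (csum k (fun j => a j * RtoC (INR (m j)))%C * L)) <= rho ^ nsum k m.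
Proof.
  induction k; intros Hk.
  - simpl. rewrite Rmult_0_l, Rmult_0_l, Rminus_0_r, exp_0. lra.
  - simpl csum. simpl nsum. rewrite pow_add.
    replace (Re ((csum k (fun j => a j * RtoC (INR (m j))) + a k * RtoC (INR (m k))) * L)%C)
      with (Re (csum k (fun j => a j * RtoC (INR (m j)))%C * L) + INR (m k) * Re (a k * L)).
    2: { simpl. ring. }
    rewrite exp_plus, exp_nat.
    pose proof rho_bounds.
    apply Rmult_le_compat.
    + apply Rlt_le, exp_pos.
    + apply pow_le, Rlt_le, exp_pos.
    + apply IHk; lia.
    + apply pow_incr. split. apply Rlt_le, exp_pos.
      apply (rmax_ge f r k). lia.
Qed.

Definition W m := weight r q a m.
Definition Y m := qnum q (shift r w x m).

Lemma W_dom : dom rho r 1 W.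
Proof.
  intros m. unfold W, weight. rewrite Cmod_mult, Cmod_m1_pow, Cmod_cpow by auto.
  rewrite !Rmult_1_l. apply weight_exp_bound; auto.
Qed.

Let M0 := Re x * ln (Cmod q) - Im x * Carg q.
Definition Bd := (1 + exp M0) / Cmod (1 - q).

Lemma one_minus_q : (1 - q)%C <> 0%C.
Proof.
  intros E. assert (q = 1%C). { replace q with (1 - (1 - q))%C by ring. rewrite E. ring. }
  subst. rewrite Cmod_1 in Hq. lra.
Qed.

Lemma Bd_pos : 0 < Bd.
Proof.
  unfold Bd. apply Rdiv_lt_0_compat. pose proof (exp_pos M0); lra.
  apply Cmod_gt_0, one_minus_q.
Qed.

Lemma Y_bound m : Cmod (Y m) <= Bd.
Proof.
  unfold Y, qnum, Bd. rewrite Cmod_div by apply one_minus_q.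
  unfold Rdiv. apply Rmult_le_compat_r.
  { apply Rlt_le, Rinv_0_lt_compat, Cmod_gt_0, one_minus_q. }
  eapply Rle_trans. unfold Cminus. apply Cmod_triangle. rewrite Cmod_opp, Cmod_1.
  apply Rplus_le_compat_l. rewrite Cmod_cpow by auto. apply exp_mono.
  unfold shift, M0. set (S := csum r (fun j => RtoC (w j * INR (m j)))).
  assert (HS : 0 <= Re S).
  { apply csum_RtoC_Re. intros j Hj. specialize (Hw j Hj). pose proof (pos_INR (m j)). nra. }
  assert (HI : Im S = 0) by apply csum_RtoC_Im.
  assert (Hl : ln (Cmod q) < 0).
  { rewrite <- ln_1. apply ln_increasing; auto. pose proof (Cmod_ge_0 q). lra. }
  unfold L, Clog. unfold Re, Im in *. destruct x as [x1 x2]. destruct S as [s1 s2]. simpl in *.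
  subst s2. nra.
Qed.

Lemma Wpow_dom n : dom rho r (Bd ^ n) (fun m => W m * Cpow (Y m) n)%C.
Proof.
  intros m. rewrite Cmod_mult, Cmod_pow. pose proof (W_dom m). pose proof (Y_bound m).
  pose proof (Cmod_ge_0 (W m)). pose proof (Cmod_ge_0 (Y m)).
  rewrite Rmult_1_l in H.
  replace (Bd ^ n * rho ^ nsum r m) with (rho ^ nsum r m * Bd ^ n) by ring.
  apply Rmult_le_compat; auto. apply pow_le; auto.
  apply pow_incr; auto.
Qed.

Lemma Wexp_dom t : dom rho r (exp (Bd * Cmod t)) (fun m => W m * Cexp (Y m * t))%C.
Proof.
  intros m. rewrite Cmod_mult, Cmod_Cexp. pose proof (W_dom m). pose proof (Y_bound m).
  pose proof (Cmod_ge_0 (W m)). rewrite Rmult_1_l in H.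
  replace (exp (Bd * Cmod t) * rho ^ nsum r m) with (rho ^ nsum r m * exp (Bd * Cmod t)) by ring.
  apply Rmult_le_compat; auto.
  apply Rlt_le, exp_pos.
  apply exp_mono. eapply Rle_trans. apply Rle_abs. eapply Rle_trans. apply re_le_Cmod.
  rewrite Cmod_mult. apply Rmult_le_compat_r; auto. apply Cmod_ge_0.
Qed.

Definition E0 n := qzeta q r w a x (- RtoC (INR n)).

Lemma E0_eq n : E0 n = (Cpow (RtoC 2) r * msum r (fun m => W m * Cpow (Y m) n))%C.
Proof.
  unfold E0, qzeta. f_equal. f_equal. apply functional_extensionality. intros m.
  rewrite Copp_Copp, cpow_nat. reflexivity.
Qed.

Lemma rho_ok : 0 <= rho < 1.
Proof. apply rho_bounds. Qed.

Definition Tm t n m := (W m * (Cpow (Y m * t) n / RtoC (INR (fact n))))%C.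

Lemma Tm_eq t n m : Tm t n m = ((Cpow t n / RtoC (INR (fact n))) * (W m * Cpow (Y m) n))%C.
Proof. unfold Tm. rewrite Cpow_mult_l. unfold Cdiv. ring. Qed.

Lemma Tm_dom t n : dom rho r (Cmod (Cpow t n / RtoC (INR (fact n))) * Bd ^ n) (Tm t n).
Proof.
  intros m. rewrite Tm_eq. apply (dom_scal rho r (Bd ^ n) _ (fun m => W m * Cpow (Y m) n)%C).
  apply Wpow_dom.
Qed.

Lemma term_eq n t : (E0 n * Cpow t n / RtoC (INR (fact n)))%C =
  (Cpow (RtoC 2) r * msum r (Tm t n))%C.
Proof.
  rewrite E0_eq. rewrite (functional_extensionality (Tm t n) _ (Tm_eq t n)).
  rewrite (msum_scal rho rho_ok r (Bd ^ n)).
  - unfold Cdiv. ring.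
  - apply pow_le. pose proof Bd_pos; lra.
  - apply Wpow_dom.
Qed.

Lemma partial t N : sum_n (fun n => E0 n * Cpow t n / RtoC (INR (fact n)))%C N =
  (Cpow (RtoC 2) r * msum r (fun m => W m * Pexp (Y m * t) N))%C /\
  exists K0, 0 <= K0 /\ dom rho r K0 (fun m => W m * Pexp (Y m * t) N)%C.
Proof.
  assert (Hn : forall n, 0 <= Cmod (Cpow t n / RtoC (INR (fact n))) * Bd ^ n).
  { intros n. apply Rmult_le_pos. apply Cmod_ge_0. apply pow_le. pose proof Bd_pos; lra. }
  induction N.
  - assert (HE : (fun m => W m * Pexp (Y m * t) 0)%C = Tm t 0).
    { apply functional_extensionality. intros m. unfold Pexp. rewrite sum_O. reflexivity. }
    rewrite sum_O, HE. split. apply term_eq. eexists; split; [|apply Tm_dom]. apply Hn.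
  - destruct IHN as [IH1 [K0 [HK0 HD]]].
    assert (HE : (fun m => W m * Pexp (Y m * t) (S N))%C =
                 (fun m => W m * Pexp (Y m * t) N + Tm t (S N) m)%C).
    { apply functional_extensionality. intros m. unfold Pexp. rewrite sum_Sn.
      unfold Tm. change (plus ?u ?v) with (u + v)%C. ring. }
    rewrite sum_Sn, HE. change (plus ?u ?v) with (u + v)%C. split.
    + rewrite IH1, term_eq. rewrite (msum_plus rho rho_ok r K0 _ _ _ HK0 (Hn (S N)) HD (Tm_dom t (S N))).
      symmetry. apply Cmult_plus_distr_l.
    + eexists; split; [|apply (dom_plus _ _ _ _ _ _ HD (Tm_dom t (S N)))]. pose proof (Hn (S N)). lra.
Qed.

Lemma gen_series t :
  is_series (fun n => E0 n * Cpow t n / RtoC (INR (fact n)))%C (qEuler_gen q r w a x t).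
Proof.
  apply is_series_C_of_bound. intros eps Heps.
  set (R0 := Bd * Cmod t).
  assert (HR0 : 0 <= R0) by (unfold R0; pose proof Bd_pos; pose proof (Cmod_ge_0 t); nra).
  pose proof rho_ok as Hr.
  set (Kr := Cmod (Cpow (RtoC 2) r) * (2 / (1 - rho)) ^ r).
  assert (HKr : 0 <= Kr).
  { unfold Kr. apply Rmult_le_pos. apply Cmod_ge_0. apply pow_le.
    apply Rlt_le, Rdiv_lt_0_compat; lra. }
  destruct (lim_eps _ _ (exp_is R0) (eps / (Kr + 1))) as [N0 HN0].
  { apply Rdiv_lt_0_compat; lra. }
  exists N0. intros N HN.
  specialize (HN0 N HN).
  assert (HT : Texp R0 N < eps / (Kr + 1)).
  { unfold Texp. pose proof (Rle_abs (- (sum_n (fun k => R0 ^ k / INR (fact k)) N - exp R0))).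
    rewrite Rabs_Ropp in H. lra. }
  destruct (partial t N) as [HP [K0 [HK0 HD]]].
  rewrite HP. unfold qEuler_gen.
  fold W Y.
  change (fun m => weight r q a m * Cexp (qnum q (shift r w x m) * t))%C
    with (fun m => W m * Cexp (Y m * t))%C.
  replace (Cpow (RtoC 2) r * msum r (fun m => W m * Cexp (Y m * t)) -
           Cpow (RtoC 2) r * msum r (fun m => W m * Pexp (Y m * t) N))%C
    with (Cpow (RtoC 2) r * msum r (fun m => W m * (Cexp (Y m * t) - Pexp (Y m * t) N)))%C.
  2: { rewrite (functional_extensionality (fun m => W m * (Cexp (Y m * t) - Pexp (Y m * t) N))%C
          (fun m => W m * Cexp (Y m * t) + (-1) * (W m * Pexp (Y m * t) N))%C)
       by (intros; ring).
       rewrite (msum_plus rho Hr r (exp R0) (Cmod (-1) * K0)).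
       - rewrite (msum_scal rho Hr r K0); auto. ring.
       - apply Rlt_le, exp_pos.
       - apply Rmult_le_pos; auto. apply Cmod_ge_0.
       - apply Wexp_dom.
       - apply (dom_scal rho r K0 (-1) (fun m => W m * Pexp (Y m * t) N)%C). auto. }
  rewrite Cmod_mult.
  assert (HB : Cmod (msum r (fun m => W m * (Cexp (Y m * t) - Pexp (Y m * t) N))%C)
               <= Texp R0 N * (2 / (1 - rho)) ^ r).
  { apply msum_bound; auto. apply Texp_nonneg; auto.
    intros m. rewrite Cmod_mult. pose proof (W_dom m). rewrite Rmult_1_l in H.
    rewrite Rmult_comm. apply Rmult_le_compat; auto. apply Cmod_ge_0. apply Cmod_ge_0.
    apply exp_tail. rewrite Cmod_mult. unfold R0. apply Rmult_le_compat_r. apply Cmod_ge_0.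
    apply Y_bound. }
  assert (HT0 : 0 <= Texp R0 N) by (apply Texp_nonneg; auto).
  assert (0 <= (2 / (1 - rho)) ^ r) by (apply pow_le, Rlt_le, Rdiv_lt_0_compat; lra).
  pose proof (Cmod_ge_0 (Cpow (RtoC 2) r)).
  apply Rle_lt_trans with (Cmod (Cpow (RtoC 2) r) * (Texp R0 N * (2 / (1 - rho)) ^ r)).
  { apply Rmult_le_compat_l; auto. }
  apply Rle_lt_trans with (Kr * (eps / (Kr + 1))).
  { unfold Kr at 1. rewrite Rmult_assoc. apply Rmult_le_compat_l; auto.
    replace (Texp R0 N * (2 / (1 - rho)) ^ r) with ((2 / (1 - rho)) ^ r * Texp R0 N) by ring. apply Rmult_le_compat_l; auto. lra. }
  apply Rlt_le_trans with ((Kr + 1) * (eps / (Kr + 1))).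
  { apply Rmult_lt_compat_r. apply Rdiv_lt_0_compat; lra. lra. }
  right. field. lra.
Qed.
End Main.

Lemma is_series_Re (u : nat -> C) l : is_series u l -> is_series (fun n => Re (u n)) (Re l).
Proof.
  intros H. unfold is_series in *.
  apply (proj2 (filterlim_locally _ _)). intros eps.
  pose proof (proj1 (filterlim_locally _ _) H eps) as G.
  revert G; apply filter_imp. intros N HN. rewrite sum_n_C in HN. apply HN.
Qed.

Lemma is_series_Im (u : nat -> C) l : is_series u l -> is_series (fun n => Im (u n)) (Im l).
Proof.
  intros H. unfold is_series in *.
  apply (proj2 (filterlim_locally _ _)). intros eps.
  pose proof (proj1 (filterlim_locally _ _) H eps) as G.
  revert G; apply filter_imp. intros N HN. rewrite sum_n_C in HN. apply HN.
Qed.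

Lemma bounded_init (u : nat -> R) N : exists M, forall n, (n <= N)%nat -> Rabs (u n) <= M.
Proof.
  induction N.
  - exists (Rabs (u O)). intros n Hn. replace n with O by lia. lra.
  - destruct IHN as [M HM]. exists (Rmax M (Rabs (u (S N)))). intros n Hn.
    destruct (Nat.eq_dec n (S N)). subst; apply Rmax_r.
    eapply Rle_trans; [apply HM; lia| apply Rmax_l].
Qed.

Lemma lim0_bounded (u : nat -> R) : is_lim_seq u 0 -> exists M, forall n, Rabs (u n) <= M.
Proof.
  intros H. unfold is_lim_seq in H.
  destruct (proj1 (filterlim_locally _ _) H (mkposreal 1 Rlt_0_1)) as [N HN].
  destruct (bounded_init u N) as [M HM]. exists (Rmax M 1). intros n.
  destruct (Compare_dec.le_lt_dec n N).
  - eapply Rle_trans; [apply HM; auto| apply Rmax_l].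
  - specialize (HN n ltac:(lia)). simpl in HN.
    change (Rabs (u n - 0) < 1) in HN. rewrite Rminus_0_r in HN.
    eapply Rle_trans; [left; exact HN| apply Rmax_r].
Qed.

Lemma real_coef_zero (d : nat -> R) (rho0 : R) : 0 < rho0 ->
  (forall s, Rabs s < rho0 -> is_series (fun n => d n * s ^ n) 0) -> forall n, d n = 0.
Proof.
  intros Hr H n.
  assert (HR : Rbar_lt 0 (CV_radius d)).
  { destruct (CV_radius_bounded d) as [Hub _].
    assert (Hin : exists M, forall n, Rabs (d n * (rho0 / 2) ^ n) <= M).
    { apply lim0_bounded. apply ex_series_lim_0. exists 0. apply H.
      rewrite Rabs_pos_eq; lra. }
    specialize (Hub _ Hin). destruct (CV_radius d); simpl in *; auto; lra. }
  pose proof (Derive_n_coef d n HR) as HD.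
  assert (HZ : Derive_n (PSeries d) n 0 = Derive_n (fun _ => 0) n 0).
  { apply Derive_n_ext_loc. exists (mkposreal rho0 Hr). intros y Hy.
    change (Rabs (y - 0) < rho0) in Hy. rewrite Rminus_0_r in Hy.
    unfold PSeries. apply is_series_unique. auto. }
  assert (HZ2 : Derive_n (fun _ : R => 0) n 0 = 0).
  { destruct n. reflexivity. apply Derive_n_const. }
  rewrite HZ, HZ2 in HD. pose proof (fact_pos n). nra.
Qed.

Lemma Re_term (e : C) (s : R) n :
  Re (e * Cpow (RtoC s) n / RtoC (INR (fact n)))%C = Re e / INR (fact n) * s ^ n.
Proof.
  rewrite <- RtoC_pow. pose proof (fact_pos n).
  destruct e as [u v]. unfold Cdiv, Cinv, Cmult, Re; simpl. field. lra.
Qed.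
Lemma Im_term (e : C) (s : R) n :
  Im (e * Cpow (RtoC s) n / RtoC (INR (fact n)))%C = Im e / INR (fact n) * s ^ n.
Proof.
  rewrite <- RtoC_pow. pose proof (fact_pos n).
  destruct e as [u v]. unfold Cdiv, Cinv, Cmult, Im; simpl. field. lra.
Qed.

Lemma coef_unique (E F : nat -> C) (G : C -> C) rho1 rho2 : 0 < rho1 -> 0 < rho2 ->
  (forall t, Cmod t < rho1 -> is_series (fun n => E n * Cpow t n / RtoC (INR (fact n)))%C (G t)) ->
  (forall t, Cmod t < rho2 -> is_series (fun n => F n * Cpow t n / RtoC (INR (fact n)))%C (G t)) ->
  forall n, E n = F n.
Proof.
  intros H1 H2 HE HF n.
  set (rho0 := Rmin rho1 rho2).
  assert (Hr0 : 0 < rho0) by (apply Rmin_pos; auto).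
  assert (Hs : forall s, Rabs s < rho0 -> Cmod (RtoC s) < rho1 /\ Cmod (RtoC s) < rho2).
  { intros s Hs. rewrite Cmod_R. pose proof (Rmin_l rho1 rho2); pose proof (Rmin_r rho1 rho2).
    unfold rho0 in Hs. lra. }
  apply C_eq.
  - assert (Hd : forall k, Re (E k) / INR (fact k) - Re (F k) / INR (fact k) = 0).
    { apply (real_coef_zero _ rho0 Hr0). intros s Hs0. destruct (Hs s Hs0) as [Hs1 Hs2].
      pose proof (is_series_Re _ _ (HE _ Hs1)) as A.
      pose proof (is_series_Re _ _ (HF _ Hs2)) as B.
      pose proof (is_series_minus _ _ _ _ A B) as Cc.
      replace 0 with (plus (Re (G (RtoC s))) (opp (Re (G (RtoC s))))).
      2: { change (Re (G s) + - Re (G s) = 0). ring. }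
      eapply is_series_ext; [|exact Cc]. intros k. cbv beta.
      rewrite !Re_term. change ((Re (E k) / INR (fact k) * s ^ k) + - (Re (F k) / INR (fact k) * s ^ k) =
        (Re (E k) / INR (fact k) - Re (F k) / INR (fact k)) * s ^ k). ring. }
    specialize (Hd n). pose proof (fact_pos n).
    apply (Rmult_eq_reg_r (/ INR (fact n))). unfold Rdiv in Hd. lra.
    apply Rgt_not_eq, Rlt_gt, Rinv_0_lt_compat; lra.
  - assert (Hd : forall k, Im (E k) / INR (fact k) - Im (F k) / INR (fact k) = 0).
    { apply (real_coef_zero _ rho0 Hr0). intros s Hs0. destruct (Hs s Hs0) as [Hs1 Hs2].
      pose proof (is_series_Im _ _ (HE _ Hs1)) as A.
      pose proof (is_series_Im _ _ (HF _ Hs2)) as B.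
      pose proof (is_series_minus _ _ _ _ A B) as Cc.
      replace 0 with (plus (Im (G (RtoC s))) (opp (Im (G (RtoC s))))).
      2: { change (Im (G s) + - Im (G s) = 0). ring. }
      eapply is_series_ext; [|exact Cc]. intros k. cbv beta.
      rewrite !Im_term. change ((Im (E k) / INR (fact k) * s ^ k) + - (Im (F k) / INR (fact k) * s ^ k) =
        (Im (E k) / INR (fact k) - Im (F k) / INR (fact k)) * s ^ k). ring. }
    specialize (Hd n). pose proof (fact_pos n).
    apply (Rmult_eq_reg_r (/ INR (fact n))). unfold Rdiv in Hd. lra.
    apply Rgt_not_eq, Rlt_gt, Rinv_0_lt_compat; lra.
Qed.

Lemma zero_case q r w a x : q = RtoC 0 -> (forall j, (j < r)%nat -> 0 < w j) -> 0 < Re x ->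
  forall t, is_series (fun n => qzeta q r w a x (- RtoC (INR n)) * Cpow t n / RtoC (INR (fact n)))%C
    (qEuler_gen q r w a x t).
Proof.
  intros Hq0 Hw Hx t. subst q.
  assert (Y1 : forall m, qnum (RtoC 0) (shift r w x m) = RtoC 1).
  { intros m. unfold qnum, cpow.
    destruct (Req_dec_T (Cmod (RtoC 0)) 0) as [_|C0]; [|rewrite Cmod_0 in C0; lra].
    destruct (Req_dec_T (Cmod (shift r w x m)) 0) as [H|H].
    - exfalso. apply Cmod_eq_0 in H. unfold shift in H.
      assert (0 <= Re (csum r (fun j => RtoC (w j * INR (m j))))).
      { apply csum_RtoC_Re. intros j Hj. specialize (Hw j Hj). pose proof (pos_INR (m j)). nra. }
      apply (f_equal Re) in H. unfold Re in *. simpl in H. lra.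
    - apply C_eq; unfold Cdiv, Cinv, Cmult, Cminus, Cplus, Copp, Re, Im; simpl; field. }
  assert (Wr : forall m, Im (weight r (RtoC 0) a m) = 0).
  { intros m. unfold weight. rewrite <- RtoC_pow. unfold cpow.
    destruct (Req_dec_T (Cmod (RtoC 0)) 0) as [_|C0]; [|rewrite Cmod_0 in C0; lra].
    destruct (Req_dec_T _ 0); unfold Im; simpl; ring. }
  unfold qEuler_gen, qzeta.
  rewrite (functional_extensionality
    (fun m => weight r (RtoC 0) a m * Cexp (qnum (RtoC 0) (shift r w x m) * t))%C
    (fun m => Cexp t * weight r (RtoC 0) a m)%C).
  2: { intros m. rewrite Y1. replace (RtoC 1 * t)%C with t by ring. ring. }
  rewrite (msum_scal_real r (Cexp t) _ Wr).
  set (S := msum r (fun m => weight r (RtoC 0) a m)).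
  assert (HE : forall n, msum r (fun m => weight r (RtoC 0) a m * cpow (qnum (RtoC 0) (shift r w x m)) (- - RtoC (INR n)))%C = S).
  { intros n. unfold S. f_equal. apply functional_extensionality. intros m.
    rewrite Y1, Copp_Copp, cpow_nat, Cpow_1_l. ring. }
  pose proof (@is_series_scal_l C_AbsRing C_NormedModule (Cpow (RtoC 2) r * S)%C _ _ (Cexp_series t)) as H.
  eapply is_series_ext; [|replace (Cpow (RtoC 2) r * (Cexp t * S))%C with (scal (Cpow (RtoC 2) r * S)%C (Cexp t)); [exact H|]].
  - intros n. cbv beta. rewrite HE. change (scal ?u ?v) with (u * v)%C.
    match goal with |- ?A = ?B => change (@eq C A B) end. unfold Cdiv. ring.
  - change (scal ?u ?v) with (u * v)%C.
    match goal with |- ?A = ?B => change (@eq C A B) end. ring.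
Qed.

Theorem theorem7 (q : C) (r : nat) (w : nat -> R) (a : nat -> C) (x : C) :
  Cmod q < 1 ->
  (forall j, (j < r)%nat -> 0 < w j) ->
  0 < Re x ->
  (forall j, (j < r)%nat -> Cmod (cpow q (a j)) < 1) ->
  (exists E : nat -> C, is_qEuler_seq q r w a x E) /\
  (forall E : nat -> C, is_qEuler_seq q r w a x E ->
     forall n : nat, qzeta q r w a x (- RtoC (INR n)) = E n).
Proof.
  intros Hq Hw Hx Ha.
  assert (Hgen : forall t, is_series (fun n => qzeta q r w a x (- RtoC (INR n)) * Cpow t n / RtoC (INR (fact n)))%C
    (qEuler_gen q r w a x t)).
  { destruct (Req_dec (Cmod q) 0) as [H0|H0].
    - apply Cmod_eq_0 in H0. apply zero_case; auto.
    - intros t. exact (gen_series q r w a x Hq H0 Hw Hx Ha t). }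
  split.
  - exists (fun n => qzeta q r w a x (- RtoC (INR n))). exists 1. split; [lra|]. intros t _. apply Hgen.
  - intros E [rho1 [Hr1 HE]] n.
    apply (coef_unique (fun n => qzeta q r w a x (- RtoC (INR n))) E (qEuler_gen q r w a x) 1 rho1); auto; lra.
Qed.
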